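(* Let $N_{\rm q}\ge1$ and $N\ge 2$ be integers, let $\rho$ be an $N_{\rm q}$-qubit density matrix with eigenvalues $\lambda_1\ge\lambda_2\ge\dots\ge\lambda_{2^{N_{\rm q}}}\ge 0$, and let $\tilde{\boldsymbol\lambda}=[\lambda_2,\dots,\lambda_{2^{N_{\rm q}}}]^{\rm T}$. For a function $g$ write $\mathbb{E}\{g(\lambda)\}=\frac{1}{2^{N_{\rm q}}-1}\sum_{i=2}^{2^{N_{\rm q}}}g(\lambda_i)$, let $\mu=\mathbb{E}\{\lambda\}$ and assume $\mu>0$. Define the relative noise bandwidth $b(\tilde{\boldsymbol\lambda})=\mu^{-1}\sqrt{\mathbb{E}\{|\lambda-\mu|^2\}}$. For $\boldsymbol\beta\in\mathbb{R}^{N-1}$ let $\tilde\epsilon(\boldsymbol\beta)=\mathbb{E}\{|\lambda\prod_{n=1}^{N-1}(\lambda-\beta_n)|\}$ and define the error ratio $R(\boldsymbol\beta)=\tilde\epsilon(\boldsymbol\beta)/\tilde\epsilon(\mathbf 0)$. Let $\boldsymbol\beta=\mu\mathbf 1_{N-1}$ (the $N$-th order Type-1 permutation filter). Then $$R(\boldsymbol\beta)\le\frac{1}{\mu}\Big[b(\tilde{\boldsymbol\lambda})\sqrt{2^{N_{\rm q}}-1}\Big]^{N-1},$$ which describes the scaling of the error ratio as $b(\tilde{\boldsymbol\lambda})\to 0$.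
   Context: An $N$-th order permutation filter with zeros $0,\beta_1,\dots,\beta_{N-1}$ maps $\rho$ to $\rho\prod_{n=1}^{N-1}(\rho-\beta_nI)$; the choice $\boldsymbol\beta=\mathbf 0$ corresponds to $N$-th order virtual distillation ($\rho\mapsto\rho^N$). The expectation $\mathbb{E}$ is taken over the spectral distribution of the nondominant eigenvalues $\lambda_2,\dots,\lambda_{2^{N_{\rm q}}}$ of $\rho$, each with equal weight. *)

(* Defs.v *)
From HB Require Import structures.
From mathcomp Require Import all_boot all_order all_algebra.
From mathcomp Require Import complex.
Set Implicit Arguments. Unset Strict Implicit. Unset Printing Implicit Defensive.
Import Order.TTheory GRing.Theory Num.Theory.
Local Open Scope ring_scope.

Section Defs.
Variable R : rcfType.

Definition adjmx (m n : nat) (A : 'M[R[i]]_(m, n)) : 'M[R[i]]_(n, m) :=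
  (map_mx (@conjc R) A)^T.

Definition hermitian (n : nat) (A : 'M[R[i]]_n) : Prop := adjmx A = A.

(* v^dagger A v >= 0 (in the order of R[i]: real and nonnegative) *)
Definition psd (n : nat) (A : 'M[R[i]]_n) : Prop :=
  forall v : 'cV[R[i]]_n, 0 <= (adjmx v *m A *m v) 0 0.

Definition density_matrix (Nq : nat) (rho : 'M[R[i]]_(2 ^ Nq)) : Prop :=
  [/\ hermitian rho, psd rho & \tr rho = 1].

Definition eigenvalues_of (n : nat) (A : 'M[R[i]]_n) (lam : 'I_n -> R) : Prop :=
  char_poly A = \prod_(i < n) ('X - (real_complex R (lam i))%:P).

(* Index i : 'I_(2^Nq) stands for lambda_(i+1); the nondominant eigenvalues
   lambda_2..lambda_(2^Nq) are those with 0 < i. *)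
Definition Eexp (Nq : nat) (lam : 'I_(2 ^ Nq) -> R) (g : R -> R) : R :=
  (((2 ^ Nq)%N - 1)%:R)^-1 * \sum_(i < 2 ^ Nq | (0 < i)%N) g (lam i).

Definition mean (Nq : nat) (lam : 'I_(2 ^ Nq) -> R) : R := Eexp lam id.

Definition bandwidth (Nq : nat) (lam : 'I_(2 ^ Nq) -> R) : R :=
  (mean lam)^-1 * Num.sqrt (Eexp lam (fun x => `|x - mean lam| ^+ 2)).

Definition eps_tilde (Nq N : nat) (lam : 'I_(2 ^ Nq) -> R) (beta : 'I_(N - 1) -> R) : R :=
  Eexp lam (fun x => `|x * \prod_(n < N - 1) (x - beta n)|).

Definition err_ratio (Nq N : nat) (lam : 'I_(2 ^ Nq) -> R) (beta : 'I_(N - 1) -> R) : R :=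
  eps_tilde lam beta / eps_tilde lam (fun _ : 'I_(N - 1) => 0).

End Defs.

(* Main.v *)
Require Import Defs.
From HB Require Import structures.
From mathcomp Require Import all_boot all_order all_algebra.
From mathcomp Require Import complex ring.
Import Order.TTheory GRing.Theory Num.Theory.
Local Open Scope ring_scope.
Lemma sum_eig (R : rcfType) n (rho : 'M[R[i]]_n) (lam : 'I_n -> R) :
  (0 < n)%N -> \tr rho = 1 -> eigenvalues_of rho lam -> \sum_i lam i = 1.
Proof.
move=> n0 htr; rewrite /eigenvalues_of => he.
have := char_poly_trace rho n0; rewrite he htr.
set ps := [seq real_complex R (lam i) | i <- enum 'I_n].
have -> : \prod_(i < n) ('X - (real_complex R (lam i))%:P) = \prod_(p <- ps) ('X - p%:P).
  by rewrite big_map big_enum.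
have sz : size ps = n by rewrite size_map size_enum_ord.
rewrite -{1}sz coefPn_prod_XsubC ?sz -?lt0n // => /eqP; rewrite eqr_opp => /eqP.
rewrite big_map big_enum /= -rmorph_sum => h.
by apply/eqP; rewrite -(inj_eq (@complexI R)) h.
Qed.

Lemma core (R : rcfType) (n K : nat) (lam : 'I_n -> R) :
 (1 < n)%N -> (0 < K)%N -> (forall i j : 'I_n, (i <= j)%N -> lam j <= lam i) ->
 (forall i, 0 <= lam i) -> \sum_i lam i = 1 ->
 let E := fun g : R -> R => (((n - 1)%N)%:R)^-1 * \sum_(i < n | (0 < i)%N) g (lam i) in
 0 < E id ->
 E (fun x => `|x * \prod_(k < K) (x - E id)|) / E (fun x => `|x * \prod_(k < K) (x - 0)|)
  <= (E id)^-1 * ((E id)^-1 * Num.sqrt (E (fun x => `|x - E id| ^+ 2)) * Num.sqrt ((n - 1)%N)%:R) ^+ K.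
Proof.
case: n lam => [|[|n']] lam //= _ K0 mono pos sum1.
rewrite subn1 /=.
have sumS : forall F : 'I_n'.+2 -> R, \sum_(i < n'.+2 | (0 < i)%N) F i = \sum_(j < n'.+1) F (lift ord0 j).
  by move=> F; rewrite big_mkcond big_ord_recl /= add0r; apply: eq_bigr.
rewrite !sumS.
set y := fun j => lam (lift ord0 j).
rewrite -/y in sumS *.
set m := (n'.+1)%:R : R.
have m0 : 0 < m by rewrite ltr0n.
set mu := m^-1 * \sum_(j < n'.+1) y j.
move=> mu0.
have ypos j : 0 <= y j by apply: pos.
have hmu1 : mu <= m^-1.
  have: lam ord0 + \sum_j y j = 1 by rewrite -big_ord_recl.
  move=> h; rewrite /mu ler_pdivrMl // mulrC mulVf ?gt_eqF //.
  by rewrite -h lerDr.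
have ymax j : y j <= y ord0 by apply: mono.
have muy : mu <= y ord0.
  rewrite /mu ler_pdivrMl // (_ : m * y ord0 = \sum_(j < n'.+1) y ord0).
    by apply: ler_sum => j _.
  by rewrite sumr_const card_ord mulr_natl.
set D := Num.sqrt (m^-1 * \sum_(j < n'.+1) `|y j - mu| ^+ 2) * Num.sqrt m.
have s0 : 0 <= \sum_(j < n'.+1) `|y j - mu| ^+ 2 by apply: sumr_ge0 => j _; exact: sqr_ge0.
have hD j : `|y j - mu| <= D.
  rewrite /D -sqrtrM; last by rewrite mulr_ge0 ?invr_ge0 ?ler0n.
  rewrite mulrAC mulVf ?gt_eqF // mul1r.
  rewrite -sqrtr_sqr ler_sqrt // -real_normK ?num_real //.
  rewrite (bigD1 j) //= lerDl; apply: sumr_ge0 => k _; exact: sqr_ge0.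
have D0 : 0 <= D by apply: le_trans (hD ord0).
have pc (c : R) : \prod_(k < K) c = c ^+ K by rewrite prodr_const card_ord.
have e0 : m^-1 * mu ^+ K.+1 <= m^-1 * \sum_(j < n'.+1) `|y j * \prod_(k < K) (y j - 0)|.
  rewrite ler_pM2l ?invr_gt0 // (bigD1 ord0) //= pc subr0 -exprS ger0_norm ?exprn_ge0 //.
  apply: le_trans (_ : y ord0 ^+ K.+1 <= _).
    by apply: (@lerXn2r R K.+1 mu (y ord0)) => //; rewrite nnegrE // ltW.
  rewrite lerDl; apply: sumr_ge0 => k _; exact: normr_ge0.
have e1 : m^-1 * \sum_(j < n'.+1) `|y j * \prod_(k < K) (y j - mu)| <= m^-1 * D ^+ K.
  apply: (le_trans (y := mu * D ^+ K)); last first.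
    by apply: ler_wpM2r hmu1; apply: exprn_ge0.
  rewrite /mu -mulrA ler_pM2l ?invr_gt0 // mulr_suml; apply: ler_sum => j _.
  rewrite pc normrM normrX ger0_norm // ler_wpM2l //.
  by apply: (@lerXn2r R K) => //; rewrite nnegrE.
have E0pos : 0 < m^-1 * \sum_(j < n'.+1) `|y j * \prod_(k < K) (y j - 0)|.
  apply: lt_le_trans e0; rewrite mulr_gt0 ?invr_gt0 ?exprn_gt0 //.
rewrite (ler_pdivrMr _ _ E0pos).
apply: (le_trans e1).
rewrite -mulrA.
have key : forall d, m^-1 * d^+K = mu^-1 * (mu^-1 * d)^+K * (m^-1 * mu^+K.+1).
  move=> d; rewrite exprMn exprS exprVn; field.
  by rewrite addrC natr1 gt_eqF ?ltr0n // expf_neq0 ?gt_eqF.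
rewrite key ler_wpM2l //.
by apply: mulr_ge0; [| apply: exprn_ge0; apply: mulr_ge0 => //]; rewrite invr_ge0 (ltW mu0).
Qed.

Theorem proposition2 (R : rcfType) (Nq N : nat) (rho : 'M[R[i]]_(2 ^ Nq))
    (lam : 'I_(2 ^ Nq) -> R) :
  (1 <= Nq)%N -> (2 <= N)%N ->
  density_matrix rho ->
  eigenvalues_of rho lam ->
  (forall i j : 'I_(2 ^ Nq), (i <= j)%N -> lam j <= lam i) ->
  (forall i, 0 <= lam i) ->
  0 < mean lam ->
  err_ratio lam (fun _ : 'I_(N - 1) => mean lam)
    <= (mean lam)^-1 * (bandwidth lam * Num.sqrt ((2 ^ Nq)%N - 1)%:R) ^+ (N - 1).
Proof.
move=> hNq hN [_ _ htr] heig mono pos hmu.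
have n1 : (1 < 2 ^ Nq)%N.
  by rewrite -{1}(expn0 2) ltn_exp2l.
have s1 := @sum_eig _ _ _ _ (ltnW n1) htr heig.
have K0 : (0 < N - 1)%N by rewrite subn_gt0.
have := @core R (2 ^ Nq) (N - 1) lam n1 K0 mono pos s1.
rewrite /=.
move: hmu; rewrite /err_ratio /eps_tilde /bandwidth /mean /Eexp => hmu.
move=> /(_ hmu).
exact.
Qed.
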